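(* Assume the setting and hypotheses of Theorem 1 (regular pure-feedback subsystems, lower-triangular coupling $\Delta$). Let $\mathcal{X}$ be the open neighborhood of the operating point on which the joint system is flat with flat output $\mathbf{y}=(\mathbf{y}^1,\dots,\mathbf{y}^N)$, where $\mathbf{y}^i=\mathbf{x}^i_1$. Suppose that for each $i$ smooth maps $h^i_k$, $k=1,\dots,r$, are given such that for all $(\mathbf{x},\mathbf{u})\in\mathcal{X}$: $$h^i_k\big(\mathbf{x}^i_1,\dots,\mathbf{x}^i_k,\bar f^i_k(\mathbf{x}^i_1,\dots,\mathbf{x}^i_{k+1})\big)=\mathbf{x}^i_{k+1}\quad (k=1,\dots,r-1),$$ $$h^i_r\big(\mathbf{x}^i_1,\dots,\mathbf{x}^i_r,\bar f^i_r(\mathbf{x}^i_1,\dots,\mathbf{x}^i_r,\mathbf{u}^i)\big)=\mathbf{u}^i.$$ Define maps recursively for $i=1,\dots,N$ by $\Phi^i_1(\mathbf{y})=\mathbf{y}^i$. For $k=2,\dots,r+1$, set $$\Phi^i_k(\mathbf{y},\dots,\mathbf{y}^{(k-1)})=h^i_{k-1}\Big(\Phi^i_1,\dots,\Phi^i_{k-1},\; D\Phi^i_{k-1}\,[\dot{\mathbf{y}};\dots;\mathbf{y}^{(k-1)}]-\Delta^i_{k-1}\big(\Phi_1,\dots,\Phi_{k-1},\Phi^1_k,\dots,\Phi^{i-1}_k\big)\Big).$$ Here $\Phi_s=(\Phi^1_s,\dots,\Phi^N_s)$. The term $D\Phi^i_{k-1}[\dot{\mathbf{y}};\dots;\mathbf{y}^{(k-1)}]$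 is the full Jacobian of $\Phi^i_{k-1}$ with respect to its arguments $(\mathbf{y},\dots,\mathbf{y}^{(k-2)})$, applied to $(\dot{\mathbf{y}},\dots,\mathbf{y}^{(k-1)})$; that is, it is the total time derivative of $\Phi^i_{k-1}$. The recursion is well defined when carried out in increasing order of $(k-1)N+i$, and the second argument of $\Delta^i_{k-1}$ is the substitution $\mathbf{x}_{\le k-1}\mapsto(\Phi_1,\dots,\Phi_{k-1})$, $\mathbf{x}^{<i}_k\mapsto(\Phi^1_k,\dots,\Phi^{i-1}_k)$ in the lower-triangular form $\bar\Delta^i_{k-1}$. Then each $\Phi^i_k$ is smooth. Moreover, along any trajectory of the coupled joint dynamics $\dot{\mathbf{x}}=\bar f(\mathbf{x},\mathbf{u})+\Delta(\mathbf{x})$ that stays in $\mathcal{X}$, we have, for all $i=1,\dots,N$ and $k=1,\dots,r$, $$\mathbf{x}^i_k=\Phi^i_k(\mathbf{y},\dots,\mathbf{y}^{(k-1)}),\qquad \mathbf{u}^i=\Phi^i_{r+1}(\mathbf{y},\dots,\mathbf{y}^{(r)}).$$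
   Context: Setup. There are $N$ subsystems. Subsystem $i$ has input $\mathbf{u}^i\in\mathbb{R}^{m_i}$ and state $\mathbf{x}^i=(\mathbf{x}^i_1,\dots,\mathbf{x}^i_r)\in\mathbb{R}^{rm_i}$ with $\mathbf{x}^i_j\in\mathbb{R}^{m_i}$. The joint state is $\mathbf{x}=(\mathbf{x}^1,\dots,\mathbf{x}^N)$ and the joint input is $\mathbf{u}=(\mathbf{u}^1,\dots,\mathbf{u}^N)$. Write $\mathbf{x}_j=(\mathbf{x}^1_j,\dots,\mathbf{x}^N_j)$, $\mathbf{x}_{\le j}=(\mathbf{x}_1,\dots,\mathbf{x}_j)$, and $\mathbf{x}^{<i}_{j+1}=(\mathbf{x}^1_{j+1},\dots,\mathbf{x}^{i-1}_{j+1})$. Coupled dynamics: $\dot{\mathbf{x}}^i_j=\bar f^i_j(\mathbf{x}^i_1,\dots,\mathbf{x}^i_{j+1})+\Delta^i_j(\mathbf{x})$ for $j<r$, and $\dot{\mathbf{x}}^i_r=\bar f^i_r(\mathbf{x}^i_1,\dots,\mathbf{x}^i_r,\mathbf{u}^i)+\Delta^i_r(\mathbf{x})$. Regularity. Each $\bar f^i_j$ is smooth near the operating point $(\mathbf{x}^*,\mathbf{u}^* )$, and at that point $\det D_{\mathbf{x}^i_{j+1}}\bar f^i_j\ne0$ for $j<r$ and $\det D_{\mathbf{u}^i}\bar f^i_r\ne0$. Lower-triangular coupling on $\mathcal{X}$. Each $\Delta^i_j$ is smooth and $\Delta^i_j(\mathbf{x})=\bar\Delta^i_j(\mathbf{x}_{\le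 j},\mathbf{x}^{<i}_{j+1})$ on $\mathcal{X}$. *)

(* Defs.v *)
From HB Require Import structures.
From mathcomp Require Import all_boot all_order all_algebra.
From mathcomp Require Import all_classical all_reals all_analysis.
Set Implicit Arguments. Unset Strict Implicit. Unset Printing Implicit Defensive.
Import Order.TTheory GRing.Theory Num.Theory.
Import numFieldNormedType.Exports.
Local Open Scope classical_set_scope.
Local Open Scope ring_scope.

Fixpoint Cn_on {R : realType} {V W : normedModType R} (A : set V) (n : nat)
    (f : V -> W) : Prop :=
  match n with
  | 0 => forall x, A x -> {for x, continuous f}
  | n'.+1 => (forall x, A x -> differentiable f x) /\
             (forall v : V, Cn_on A n' (fun x => 'd f x v))
  end.

Definition smooth_on {R : realType} {V W : normedModType R} (A : set V)
  (f : V -> W) : Prop := forall n, Cn_on A n f.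

Definition smooth {R : realType} {V W : normedModType R} (f : V -> W) : Prop :=
  smooth_on setT f.

Definition firstrows {T : Type} {n p : nat} (q : nat) (A : 'M[T]_(n.+1, p))
  : 'M[T]_(q, p) := \matrix_(a < q, b < p) A (inord a) b.

Definition lastrows {T : Type} {n p : nat} (A : 'M[T]_(n.+2, p))
  : 'M[T]_(n.+1, p) := \matrix_(a < n.+1, b < p) A (inord a.+1) b.

Definition snoc {T : Type} {n p : nat} (A : 'M[T]_(n.+1, p)) (v : 'rV[T]_p)
  : 'M[T]_(n.+2, p) :=
  \matrix_(s < n.+2, c < p) (if (s <= n)%N then A (inord s) c else v ord0 c).

(* keep only the blocks l < i of a joint row vector (the others are set to 0):
   this encodes the argument x^{<i}_{j+1} of the lower-triangular form *)
Definition lowmask {R : realType} {N : nat} {m : 'I_N -> nat} (i : 'I_N)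
  (v : 'rV[R]_(\sum_(l < N) m l)) : 'rV[R]_(\sum_(l < N) m l) :=
  \mxrow_(l < N) (if (l < i)%N then submxrow v l else 0).

Section PhiDef.
Variables (R : realType) (N : nat) (m : 'I_N -> nat).
Local Notation M := (\sum_(l < N) m l)%N.
(* h i k : (x^i_1, ..., x^i_{k+1}, w) |-> h^i_{k+1}(...)   (0-based k) *)
Variable h : forall (i : 'I_N) (k : nat), 'M[R]_(k.+2, m i) -> 'rV[R]_(m i).
(* Dbar i k : (x_1, ..., x_{k+1}, masked x_{k+2}) |-> Dbar^i_{k+1}(...) *)
Variable Dbar : forall (i : 'I_N) (k : nat), 'M[R]_(k.+2, M) -> 'rV[R]_(m i).

(* Given F = (Phi_1, ..., Phi_{k+1}) (stacked as rows, F : jets of length k+1),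
   compute the row Phi_{k+2} = (Phi^1_{k+2}, ..., Phi^N_{k+2}) at the jet
   Y = (y, y', ..., y^(k+1)), block by block in increasing i. *)
Definition newrow (k : nat) (F : 'M[R]_(k.+1, M) -> 'M[R]_(k.+1, M))
    (Y : 'M[R]_(k.+2, M)) : 'rV[R]_M :=
  let Yp := firstrows k.+1 Y in
  let P := F Yp in
  let dterm (l : 'I_N) : 'rV[R]_(m l) :=
    'd (fun Z => submxrow (row ord_max (F Z)) l) Yp (lastrows Y) in
  let fix acc (n : nat) : 'rV[R]_M :=
    match n with
    | 0 => 0
    | n'.+1 =>
      let prev := acc n' in
      \mxrow_(l < N)
        (if (l == n' :> nat)
         then @h l k (snoc (submxrow P l) (dterm l - @Dbar l k (snoc P prev)))
         else submxrow prev l)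
    end in
  acc N.

(* PhiM k Y = rows (Phi_1, ..., Phi_{k+1}) evaluated at Y = (y, ..., y^(k)) *)
Fixpoint PhiM (k : nat) : 'M[R]_(k.+1, M) -> 'M[R]_(k.+1, M) :=
  match k return 'M[R]_(k.+1, M) -> 'M[R]_(k.+1, M) with
  | 0 => fun Y => Y
  | k'.+1 => fun Y => snoc (@PhiM k' (firstrows k'.+1 Y)) (@newrow k' (@PhiM k') Y)
  end.

(* Phi i k = Phi^i_{k+1} (paper's indexing), a map of (y, ..., y^(k)) *)
Definition Phi (i : 'I_N) (k : nat) (Y : 'M[R]_(k.+1, M)) : 'rV[R]_(m i) :=
  submxrow (row ord_max (@PhiM k Y)) i.
End PhiDef.
Arguments Phi {R N m} h Dbar i k Y.

Definition jet {R : realType} {p : nat} (y : R -> 'rV[R]_p) (k : nat) (t : R)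
  : 'M[R]_(k.+1, p) := \matrix_(s < k.+1, c < p) (derive1n s y t) ord0 c.

(* Main.v *)
Require Import Defs.
From HB Require Import structures.
From mathcomp Require Import all_boot all_order all_algebra.
From mathcomp Require Import all_classical all_reals all_analysis.
Import Order.TTheory GRing.Theory Num.Theory.
Import numFieldNormedType.Exports.
Local Open Scope classical_set_scope.
Local Open Scope ring_scope.

(* Indices are 0-based: subsystem i : 'I_N, level k < r stands for the paper's
   k+1.  The joint point z : 'M_(r.+1, \sum_i m i) stacks x_1, ..., x_r, u as
   rows; block i (submxrow z i) is (x^i_1, ..., x^i_r, u^i). *)
From mathcomp Require Import zify.
Set Implicit Arguments. Unset Strict Implicit. Unset Printing Implicit Defensive.

Section Calc.
Variable R : realType.

Lemma near_diff (V W : normedModType R) (f g : V -> W) x :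
  (\forall y \near x, f y = g y) -> differentiable f x ->
  differentiable g x /\ 'd g x = 'd f x :> (V -> W).
Proof.
move=> fg df.
have key : g \o shift x = cst (g x) + 'd f x +o_ 0 id.
  apply/eqaddoP => _/posnumP[e].
  have /eqaddoP := diff_locally df => /(_ e%:num) H.
  have gx : f x = g x by exact: (nbhs_singleton fg).
  have fg0 : \forall y \near (0:V), f (y + x) = g (y + x).
    rewrite (near_shift x) /=. near=> y. rewrite /comp /= sub0r subrK. near: y. exact: fg.
  near=> y.
  have Hy : f (y + x) = g (y + x) by near: y.
  have Hb : `|(f \o shift x - (cst (f x) + 'd f x)) y| <= e%:num * `|y|.
    by near: y; apply: H.
  apply: le_trans Hb; rewrite le_eqVlt; apply/orP; left; apply/eqP.
  congr (`| _ |). rewrite !fctE /shift -gx. congr (_ - _). exact/esym.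
have dc : continuous ('d f x) by exact: diff_continuous.
have E : 'd g x = 'd f x :> (V -> W) by apply: diff_unique.
split; last exact: E.
by apply/diff_locallyP; rewrite E; split.
Unshelve. all: by end_near. Qed.


Implicit Types (V W U : normedModType R).

Lemma Cn_sub V W (A B : set V) n (f : V -> W) :
  A `<=` B -> Cn_on B n f -> Cn_on A n f.
Proof.
move=> AB; elim: n f => [|n IH] f /=; first by move=> H x /AB; apply: H.
by move=> [d H]; split=> [x /AB|v]; [apply: d| apply: IH].
Qed.

Lemma Cn_S V W (A : set V) n (f : V -> W) : Cn_on A n.+1 f -> Cn_on A n f.
Proof.
elim: n f => [|n IH] f /=.
  by move=> [d _] x /d /differentiable_continuous.
by move=> [d H]; split=> // v; apply: IH; apply: H.
Qed.

Lemma Cn_le V W (A : set V) m n (f : V -> W) :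
  (m <= n)%N -> Cn_on A n f -> Cn_on A m f.
Proof.
elim: n => [|n IH]; first by rewrite leqn0 => /eqP ->.
rewrite leq_eqVlt => /orP [/eqP -> //|]; rewrite ltnS => mn H.
by apply: IH => //; apply: Cn_S.
Qed.

Lemma near_open V (A : set V) x : open A -> A x -> \forall y \near x, A y.
Proof. by move=> oA Ax; apply: open_nbhs_nbhs. Qed.

Lemma Cn_local V W (A : set V) n (f g : V -> W) : open A ->
  (forall x, A x -> f x = g x) -> Cn_on A n f -> Cn_on A n g.
Proof.
move=> oA; elim: n f g => [|n IH] f g fg /=.
  move=> H x Ax.
  have nfg : \forall y \near x, f y = g y.
    by near=> y; apply: fg; near: y; apply: near_open.
  have cf := H x Ax.
  apply: cvg_trans (near_eq_cvg nfg) _.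
  by rewrite -(fg x Ax).
move=> [d H]; split.
  move=> x Ax.
  have nfg : \forall y \near x, f y = g y.
    by near=> y; apply: fg; near: y; apply: near_open.
  exact: (near_diff nfg (d x Ax)).1.
move=> v; apply: (IH (fun y => 'd f y v)); last exact: H.
move=> x Ax.
have nfg : \forall y \near x, f y = g y.
  by near=> y; apply: fg; near: y; apply: near_open.
by rewrite (near_diff nfg (d x Ax)).2.
Unshelve. all: by end_near. Qed.

Lemma Cn_cst V W (A : set V) n (c : W) : Cn_on A n (cst c).
Proof.
elim: n c => [|n IH] c /=; first by move=> x _; exact: cst_continuous.
split=> [x _|v]; first exact: differentiable_cst.
have -> : (fun x => 'd (cst c) x v) = cst (0 : W).
  by apply: funext => x; rewrite diff_cst.
exact: IH.
Qed.

Lemma lin_props V W (f : V -> W) : linear f -> continuous f ->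
  (forall x, differentiable f x) /\ (forall x, 'd f x = f :> (V -> W)).
Proof.
move=> lf cf.
pose fM := GRing.isLinear.Build _ _ _ _ _ lf.
pose fL : {linear V -> W} := HB.pack f fM.
split=> x; first exact: (@linear_differentiable _ _ _ fL).
exact: (@diff_lin _ _ _ fL).
Qed.

Lemma Cn_lin V W (A : set V) n (f : V -> W) :
  linear f -> continuous f -> Cn_on A n f.
Proof.
move=> lf cf; have [d e] := lin_props lf cf.
case: n => [|n] /=; first by move=> x _; apply: cf.
split=> [x _|v]; first exact: d.
have -> : (fun x => 'd f x v) = cst (f v) by apply: funext => x; rewrite e.
exact: Cn_cst.
Qed.

Lemma Cn_linL V W U (A : set V) n (L : W -> U) (g : V -> W) : open A ->
  linear L -> continuous L -> Cn_on A n g -> Cn_on A n (L \o g).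
Proof.
move=> oA lL cL; have [dL eL] := lin_props lL cL.
elim: n g => [|n IH] g /=.
  by move=> H x Ax; apply: continuous_comp (H x Ax) (cL _).
move=> [d H]; split=> [x Ax|v]; first exact: differentiable_comp (d x Ax) (dL _).
apply: (@Cn_local _ _ _ _ (L \o (fun y => 'd g y v))) => //; last exact: IH.
by move=> x Ax /=; rewrite [in RHS]diff_comp ?eL //; exact: d.
Qed.

Lemma Cn_add V W (A : set V) n (f g : V -> W) : open A ->
  Cn_on A n f -> Cn_on A n g -> Cn_on A n (f + g).
Proof.
move=> oA; elim: n f g => [|n IH] f g /=.
  move=> Hf Hg x Ax; apply: cvgD; [exact: Hf|exact: Hg].
move=> [df Hf] [dg Hg]; split=> [x Ax|v]; first exact: differentiableD (df x Ax) (dg x Ax).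
apply: (@Cn_local _ _ _ _ ((fun y => 'd f y v) + (fun y => 'd g y v))) => //;
  last exact: IH.
by move=> x Ax; rewrite [in RHS]diffD //; [exact: df|exact: dg].
Qed.

Lemma Cn_sum V W (A : set V) n k (F : 'I_k -> V -> W) : open A ->
  (forall i, Cn_on A n (F i)) -> Cn_on A n (fun x => \sum_(i < k) F i x).
Proof.
move=> oA; elim: k F => [|k IH] F HF.
  have -> : (fun x => \sum_(i < 0) F i x) = cst (0 : W).
    by apply: funext => x; rewrite big_ord0.
  exact: Cn_cst.
have -> : (fun x => \sum_(i < k.+1) F i x) =
   (fun x => \sum_(i < k) F (widen_ord (leqnSn k) i) x) + F ord_max.
  by apply: funext => x; rewrite big_ord_recr.
by apply: Cn_add => //; apply: IH.
Qed.

Lemma Cn_mul V (A : set V) n (f g : V -> R) : open A ->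
  Cn_on A n f -> Cn_on A n g -> Cn_on A n (f * g).
Proof.
move=> oA; elim: n f g => [|n IH] f g /=.
  move=> Hf Hg x Ax; apply: cvgM; [exact: Hf|exact: Hg].
move=> [df Hf] [dg Hg]; split=> [x Ax|v]; first exact: differentiableM (df x Ax) (dg x Ax).
apply: (@Cn_local _ _ _ _ (f * (fun y => 'd g y v) + g * (fun y => 'd f y v))) => //.
  by move=> x Ax; rewrite [in RHS]diffM //; [exact: df|exact: dg].
have Sf : Cn_on A n f by apply: Cn_S; split.
have Sg : Cn_on A n g by apply: Cn_S; split.
by apply: Cn_add => //; apply: IH.
Qed.


Lemma coord_linear p q (i : 'I_p) (j : 'I_q) :
  linear (fun M : 'M[R]_(p, q) => M i j).
Proof. by move=> a u w; rewrite !mxE. Qed.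

Lemma Cn_entry V p q (A : set V) n (F : V -> 'M[R]_(p, q)) i j : open A ->
  Cn_on A n F -> Cn_on A n (fun x => F x i j).
Proof.
move=> oA HF.
exact: (Cn_linL (L := fun M : 'M[R]_(p, q) => M i j)) (coord_linear i j)
  (@coord_continuous _ _ _ i j) HF.
Qed.

Lemma scalel_linear p q (M : 'M[R]_(p, q)) : linear (fun r : R => r *: M).
Proof. by move=> a u w; rewrite scalerDl scalerA. Qed.

Lemma Cn_mx V p q (A : set V) n (F : V -> 'M[R]_(p, q)) : open A ->
  (forall i j, Cn_on A n (fun x => F x i j)) -> Cn_on A n F.
Proof.
move=> oA HF.
have -> : F = fun x => \sum_(i < p) \sum_(j < q) F x i j *: delta_mx i j.
  by apply: funext => x; rewrite -matrix_sum_delta.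
apply: Cn_sum => // i; apply: Cn_sum => // j.
exact: (Cn_linL (L := fun r : R => r *: delta_mx i j)) (scalel_linear _)
  (@scalel_continuous _ _ _) (HF i j).
Qed.

Lemma Cn_linR V U W (A : set V) n (pi : V -> U) (f : U -> W) : open A ->
  linear pi -> continuous pi -> Cn_on [set pi x | x in A] n f ->
  Cn_on A n (f \o pi).
Proof.
move=> oA lp cp; have [dp ep] := lin_props lp cp.
elim: n f => [|n IH] f /=.
  move=> H x Ax; apply: continuous_comp (cp _) _; apply: H; by exists x.
move=> [d H]; split=> [x Ax|v].
  by apply: differentiable_comp (dp x) _; apply: d; exists x.
apply: (@Cn_local _ _ _ _ ((fun y => 'd f y (pi v)) \o pi)) => //;
  last exact: IH.
move=> x Ax /=; rewrite [in RHS]diff_comp //= ?ep //.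
by apply: d; exists x.
Qed.


Lemma Cn_mulf V (A : set V) n (f g : V -> R) : open A ->
  Cn_on A n f -> Cn_on A n g -> Cn_on A n (fun x => f x * g x).
Proof. exact: Cn_mul. Qed.

Lemma Cn_addf V W (A : set V) n (f g : V -> W) : open A ->
  Cn_on A n f -> Cn_on A n g -> Cn_on A n (fun x => f x + g x).
Proof. exact: Cn_add. Qed.

Lemma Cn_coord p q (A : set 'M[R]_(p, q)) n (i : 'I_p) (j : 'I_q) :
  Cn_on A n (fun M : 'M[R]_(p, q) => M i j).
Proof. exact: Cn_lin (coord_linear i j) (@coord_continuous _ _ _ i j). Qed.

Lemma lsubmx_linear p q1 q2 : linear (@lsubmx R p q1 q2).
Proof. by move=> a u w; rewrite linearP. Qed.

Lemma Cn_comp n p' q' : forall V p q (A : set V) (B : set 'M[R]_(p, q))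
  (f : 'M[R]_(p, q) -> 'M[R]_(p', q')) (g : V -> 'M[R]_(p, q)),
  open A -> open B -> (forall x, A x -> B (g x)) ->
  Cn_on B n f -> Cn_on A n g -> Cn_on A n (f \o g).
Proof.
elim: n => [|n IH] V p q A B f g oA oB AB.
  move=> /= Hf Hg x Ax; exact: continuous_comp (Hg x Ax) (Hf _ (AB x Ax)).
move=> Hf Hg.
have df : forall x, B x -> differentiable f x := Hf.1.
have Hdf : forall w, Cn_on B n (fun y => 'd f y w) := Hf.2.
have dg : forall x, A x -> differentiable g x := Hg.1.
have Hdg : forall w, Cn_on A n (fun y => 'd g y w) := Hg.2.
split=> [x Ax|v]; first exact: differentiable_comp (dg x Ax) (df _ (AB x Ax)).
pose B' := [set Y : 'M[R]_(p, q + q) | B (lsubmx Y)].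
have oB' : open B'.
  by apply: open_comp => // Y _; exact: continuous_lsubmx.
pose Phi := fun Y : 'M[R]_(p, q + q) => \sum_(i < p) \sum_(j < q)
  rsubmx Y i j *: 'd f (lsubmx Y) (delta_mx i j).
have ePhi : forall x, A x -> 'd (f \o g) x v = Phi (row_mx (g x) ('d g x v)).
  move=> x Ax; have dgx := dg x Ax; have dfx := df _ (AB x Ax); rewrite diff_comp //.
  rewrite /Phi row_mxKl row_mxKr /=.
  rewrite {1}(matrix_sum_delta ('d g x v)) linear_sum; apply: eq_bigr => i _.
  by rewrite linear_sum; apply: eq_bigr => j _; rewrite linearZ.
apply: (@Cn_local _ _ _ _ (Phi \o (fun x => row_mx (g x) ('d g x v)))) => //.
  by move=> x Ax; rewrite ePhi.
apply: (IH _ _ _ _ B') => //.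
- by move=> x Ax; rewrite /B' /= row_mxKl; apply: AB.
- apply: Cn_mx => // a b.
  have -> : (fun Y => Phi Y a b) = fun Y => \sum_(i < p) \sum_(j < q)
      (Y i (rshift q j) * 'd f (lsubmx Y) (delta_mx i j) a b).
    apply: funext => Y; rewrite /Phi summxE; apply: eq_bigr => i _.
    rewrite summxE; apply: eq_bigr => j _.
    by rewrite !mxE.
  apply: Cn_sum => // i; apply: Cn_sum => // j.
  apply: Cn_mulf => //; first exact: Cn_coord.
  apply: (@Cn_entry _ _ _ _ _ (fun Y => 'd f (lsubmx Y) (delta_mx i j))) => //.
  apply: (IH _ _ _ B' B (fun y => 'd f y (delta_mx i j)) (@lsubmx R p q q)) => //.
  exact: Cn_lin (@lsubmx_linear _ _ _) (@continuous_lsubmx _ _ _ _).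
- apply: Cn_mx => // a k.
  case: (split_ordP k) => j ->.
    have -> : (fun x => row_mx (g x) ('d g x v) a (lshift q j)) =
              fun x => g x a j by apply: funext => x; rewrite row_mxEl.
    by apply: Cn_entry => //; apply: Cn_S.
  have -> : (fun x => row_mx (g x) ('d g x v) a (rshift q j)) =
            fun x => 'd g x v a j by apply: funext => x; rewrite row_mxEr.
  by apply: Cn_entry.
Qed.

End Calc.

Section Mx.
Variable R : realType.
Implicit Types (V W U : normedModType R).

Lemma Cn_ext V W (A : set V) n (f g : V -> W) :
  (forall x, f x = g x) -> Cn_on A n g -> Cn_on A n f.
Proof. by move=> fg; have -> : f = g by apply: funext. Qed.

Lemma Cn_oppR V (A : set V) n (f : V -> R) : open A ->
  Cn_on A n f -> Cn_on A n (fun x => - f x).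
Proof.
move=> oA Hf; apply: (Cn_ext (g := fun x => (-1) * f x)).
  by move=> x; rewrite mulN1r.
by apply: Cn_mulf => //; apply: Cn_cst.
Qed.

Lemma Cn_subm V p q (A : set V) n (F G : V -> 'M[R]_(p, q)) : open A ->
  Cn_on A n F -> Cn_on A n G -> Cn_on A n (fun x => F x - G x).
Proof.
move=> oA HF HG; apply: Cn_mx => // i j.
apply: (Cn_ext (g := fun x => F x i j + - G x i j)); first by move=> x; rewrite !mxE.
by apply: Cn_addf => //; [exact: Cn_entry|apply: Cn_oppR => //; exact: Cn_entry].
Qed.

Lemma Cn_snoc V n' p (A : set V) n (F : V -> 'M[R]_(n'.+1, p)) (G : V -> 'rV[R]_p) :
  open A -> Cn_on A n F -> Cn_on A n G -> Cn_on A n (fun x => snoc (F x) (G x)).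
Proof.
move=> oA HF HG; apply: Cn_mx => // s c.
apply: (Cn_ext (g := fun x => if (s <= n')%N then F x (inord s) c else G x ord0 c)).
  by move=> x; rewrite mxE.
by case: (s <= n')%N; exact: Cn_entry.
Qed.

Lemma Cn_firstrows V n' p q (A : set V) n (F : V -> 'M[R]_(n'.+1, p)) :
  open A -> Cn_on A n F -> Cn_on A n (fun x => firstrows q (F x)).
Proof.
move=> oA HF; apply: Cn_mx => // s c.
apply: (Cn_ext (g := fun x => F x (inord s) c)); first by move=> x; rewrite mxE.
exact: Cn_entry.
Qed.

Lemma Cn_lastrows V n' p (A : set V) n (F : V -> 'M[R]_(n'.+2, p)) :
  open A -> Cn_on A n F -> Cn_on A n (fun x => lastrows (F x)).
Proof.
move=> oA HF; apply: Cn_mx => // s c.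
apply: (Cn_ext (g := fun x => F x (inord s.+1) c)); first by move=> x; rewrite mxE.
exact: Cn_entry.
Qed.

Lemma Cn_row V p q (A : set V) n (F : V -> 'M[R]_(p, q)) i :
  open A -> Cn_on A n F -> Cn_on A n (fun x => row i (F x)).
Proof.
move=> oA HF; apply: Cn_mx => // s c.
apply: (Cn_ext (g := fun x => F x i c)); first by move=> x; rewrite mxE.
exact: Cn_entry.
Qed.

Lemma Cn_submxrow V N (mm : 'I_N -> nat) p (A : set V) n
  (F : V -> 'M[R]_(p, \sum_(l < N) mm l)) l :
  open A -> Cn_on A n F -> Cn_on A n (fun x => submxrow (F x) l).
Proof.
move=> oA HF; apply: Cn_mx => // s c.
apply: (Cn_ext (g := fun x => F x s (tagnat.Rank l c))); first by move=> x; rewrite mxE.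
exact: Cn_entry.
Qed.

Lemma Cn_mxrow V N (mm : 'I_N -> nat) p (A : set V) n
  (B : forall l : 'I_N, V -> 'M[R]_(p, mm l)) :
  open A -> (forall l, Cn_on A n (B l)) ->
  Cn_on A n (fun x => \mxrow_(l < N) B l x).
Proof.
move=> oA HB; apply: Cn_mx => // s c.
apply: (Cn_ext (g := fun x => B (tagnat.sig1 c) x s (tagnat.sig2 c))).
  by move=> x; rewrite mxE.
exact: Cn_entry.
Qed.

Lemma Cn_dG V p q p' q' (A : set V) (B : set 'M[R]_(p, q)) n
  (G : 'M[R]_(p, q) -> 'M[R]_(p', q')) (a b : V -> 'M[R]_(p, q)) :
  open A -> open B -> (forall x, A x -> B (a x)) ->
  Cn_on B n.+1 G -> Cn_on A n a -> Cn_on A n b ->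
  Cn_on A n (fun x => 'd G (a x) (b x)).
Proof.
move=> oA oB AB HG Ha Hb.
apply: (Cn_ext (g := fun x => \sum_(i < p) \sum_(j < q)
   b x i j *: 'd G (a x) (delta_mx i j))).
  move=> x; rewrite {1}(matrix_sum_delta (b x)) linear_sum.
  apply: eq_bigr => i _; rewrite linear_sum; apply: eq_bigr => j _.
  by rewrite linearZ.
apply: Cn_mx => // s c.
apply: (Cn_ext (g := fun x => \sum_(i < p) \sum_(j < q)
   (b x i j * 'd G (a x) (delta_mx i j) s c))).
  move=> x; rewrite summxE; apply: eq_bigr => i _; rewrite summxE.
  by apply: eq_bigr => j _; rewrite !mxE.
apply: Cn_sum => // i; apply: Cn_sum => // j.
apply: Cn_mulf => //; first exact: Cn_entry.
apply: (Cn_entry (F := fun x => 'd G (a x) (delta_mx i j))) => //.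
exact: (Cn_comp (A := A) (B := B) (f := fun y => 'd G y (delta_mx i j)) (g := a)) oA oB AB (HG.2 _) Ha.
Qed.

End Mx.

Section Part1.
#[local] Hint Resolve openT : core.
Variables (R : realType) (N : nat) (m : 'I_N -> nat).
Local Notation M := (\sum_(l < N) m l)%N.
Variable h : forall (i : 'I_N) (k : nat), 'M[R]_(k.+2, m i) -> 'rV[R]_(m i).
Variable Dbar : forall (i : 'I_N) (k : nat), 'M[R]_(k.+2, M) -> 'rV[R]_(m i).

Definition accf (k : nat) (P : 'M[R]_(k.+1, M))
  (dt : forall l : 'I_N, 'rV[R]_(m l)) :=
  fix acc (n : nat) : 'rV[R]_M :=
    match n with
    | 0 => 0
    | n'.+1 =>
      let prev := acc n' in
      \mxrow_(l < N)
        (if (l == n' :> nat)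
         then @h l k (snoc (submxrow P l) (dt l - @Dbar l k (snoc P prev)))
         else submxrow prev l)
    end.

Lemma newrowE k (F : 'M[R]_(k.+1, M) -> 'M[R]_(k.+1, M)) Y :
  newrow h Dbar F Y = accf (F (firstrows k.+1 Y))
    (fun l => 'd (fun Z => submxrow (row ord_max (F Z)) l)
                 (firstrows k.+1 Y) (lastrows Y)) N.
Proof. by []. Qed.

Lemma Cn_id (V : normedModType R) (A : set V) n : Cn_on A n (fun x => x).
Proof. by apply: Cn_lin => // x; exact: cvg_id. Qed.

Lemma smooth_accf k (V : normedModType R) (P : V -> 'M[R]_(k.+1, M))
  (dt : forall l : 'I_N, V -> 'rV[R]_(m l)) :
  (forall l, smooth (@h l k)) -> (forall l, smooth (@Dbar l k)) ->
  smooth P -> (forall l, smooth (dt l)) ->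
  forall n', smooth (fun Y => accf (P Y) (fun l => dt l Y) n').
Proof.
move=> Hh HD HP Hdt; elim=> [|n' IH] n /=.
  exact: Cn_cst.
apply: Cn_mxrow => // l.
case: (l == n' :> nat).
  apply: (Cn_comp (B := setT) (f := @h l k)) => //; first exact: Hh.
  apply: Cn_snoc => //; first by apply: Cn_submxrow => //; apply: HP.
  apply: Cn_subm => //; first exact: Hdt.
  apply: (Cn_comp (B := setT) (f := @Dbar l k)) => //; first exact: HD.
  by apply: Cn_snoc => //.
by apply: Cn_submxrow => //; apply: IH.
Qed.


Lemma smooth_PhiM k :
  (forall l k', (k' < k)%N -> smooth (@h l k')) ->
  (forall l k', (k' < k)%N -> smooth (@Dbar l k')) ->
  smooth (@PhiM R N m h Dbar k).
Proof.
elim: k => [|k IH] Hh HD.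
  by move=> n; exact: Cn_id.
have IHk : smooth (@PhiM R N m h Dbar k).
  by apply: IH => l k' lt; [apply: Hh|apply: HD]; apply: ltn_trans lt _.
have Hfr : smooth (fun Y : 'M[R]_(k.+2, M) => firstrows k.+1 Y).
  by move=> n; apply: Cn_firstrows => //; exact: Cn_id.
have HP : smooth (fun Y : 'M[R]_(k.+2, M) => PhiM h Dbar (firstrows k.+1 Y)).
  move=> n; exact: (Cn_comp (B := setT) (f := PhiM h Dbar (k:=k))
     (g := fun Y : 'M[R]_(k.+2, M) => firstrows k.+1 Y)).
move=> n; apply: Cn_snoc => //.
apply: (Cn_ext (g := fun Y => accf (PhiM h Dbar (firstrows k.+1 Y))
    (fun l => 'd (fun Z => submxrow (row ord_max (PhiM h Dbar (k:=k) Z)) l)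
                 (firstrows k.+1 Y) (lastrows Y)) N)).
  by move=> Y; rewrite newrowE.
apply: (smooth_accf (dt := fun l Y => 'd (fun Z => submxrow (row ord_max (PhiM h Dbar (k:=k) Z)) l)
                 (firstrows k.+1 Y) (lastrows Y))) => //.
- by move=> l; apply: Hh.
- by move=> l; apply: HD.
- move=> l n'; apply: (Cn_dG (B := setT)) => //; try exact: openT.
  + apply: Cn_submxrow; first exact: openT.
    apply: Cn_row; first exact: openT.
    exact: IHk.
  + apply: (Cn_lastrows (F := fun x => x)); first exact: openT.
    exact: Cn_id.
Qed.

Lemma smooth_Phi i k :
  (forall l k', (k' < k)%N -> smooth (@h l k')) ->
  (forall l k', (k' < k)%N -> smooth (@Dbar l k')) ->
  smooth (Phi h Dbar i k).
Proof.
move=> Hh HD n; apply: Cn_submxrow; first exact: openT.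
apply: Cn_row; first exact: openT.
exact: smooth_PhiM.
Qed.

End Part1.

Section MxId.
Variable R : realType.

Lemma firstrows_firstrows n p q q' (A : 'M[R]_(n.+1, p)) :
  (q <= q'.+1)%N -> (q'.+1 <= n.+1)%N ->
  firstrows q (firstrows q'.+1 A) = firstrows q A.
Proof.
move=> h1 h2; apply/matrixP => a c; rewrite !mxE; congr (A _ c).
have ha := ltn_ord a.
have e1 : (a < q'.+1)%N by clear A c; lia.
have e2 : (a < n.+1)%N by clear A c; lia.
by apply/val_inj; rewrite /= !inordK.
Qed.

Lemma submxrow_firstrows n N (mm : 'I_N -> nat) q
  (A : 'M[R]_(n.+1, \sum_(l < N) mm l)) l :
  submxrow (firstrows q A) l = firstrows q (submxrow A l).
Proof. by apply/matrixP => a c; rewrite !mxE. Qed.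

Lemma row_firstrows n p q (A : 'M[R]_(n.+1, p)) (a : nat) :
  (a < q.+1)%N -> (q.+1 <= n.+1)%N ->
  row (inord a) (firstrows q.+1 A) = row (inord a) A :> 'rV_p.
Proof.
move=> h1 h2; apply/rowP => c; rewrite !mxE; congr (A _ c).
have e2 : (a < n.+1)%N by clear A c; lia.
by apply/val_inj; rewrite /= !inordK.
Qed.

Lemma open_firstrows n p q (X : set 'M[R]_(n.+1, p)) :
  (q.+1 <= n.+1)%N -> open X -> open [set firstrows q.+1 z | z in X].
Proof.
move=> qn oX; rewrite openE => _ [z0 Xz0 <-].
pose phi := fun w : 'M[R]_(q.+1, p) =>
  \matrix_(a < n.+1, c < p) (if (a < q.+1)%N then w (inord a) c else z0 a c).
have cphi : forall w, {for w, continuous phi}.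
  have : Cn_on setT 0 phi.
    apply: Cn_mx; first exact: openT.
    move=> a c; apply: (Cn_ext (g := fun w : 'M[R]_(q.+1, p) =>
      if (a < q.+1)%N then w (inord a) c else z0 a c)).
      by move=> w; rewrite mxE.
    by case: (a < q.+1)%N; [exact: Cn_coord|exact: Cn_cst].
  by move=> H w; apply: H.
have phi0 : phi (firstrows q.+1 z0) = z0.
  apply/matrixP => a c; rewrite !mxE; case: ifP => // aq.
  have e2 : (a < n.+1)%N by clear phi cphi X oX Xz0; lia.
  by congr (z0 _ c); apply/val_inj; rewrite /= !inordK.
have fphi : forall w, firstrows q.+1 (phi w) = w.
  move=> w; apply/matrixP => a c; have ha := ltn_ord a.
  have e2 : (a < n.+1)%N by clear phi0 cphi phi X oX Xz0 w; lia.
  rewrite !mxE inordK //.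
  by rewrite ltn_ord; congr (w _ c); apply/val_inj; rewrite /= inordK.
have nX : nbhs z0 X by apply: open_nbhs_nbhs; split.
have : \forall w \near firstrows q.+1 z0, X (phi w).
  have H : phi @ firstrows q.+1 z0 --> z0.
    by rewrite -{2}phi0; exact: cphi.
  exact: H X nX.
rewrite /interior; apply: filterS => w Xw; exists (phi w) => //.
Qed.

End MxId.

Section Part2.
Variables (R : realType) (N r : nat) (m : 'I_N -> nat).
Local Notation M := (\sum_(l < N) m l)%N.
Variable fbar : forall (i : 'I_N) (k : nat), 'M[R]_(k.+2, m i) -> 'rV[R]_(m i).
Variable Delta : forall (i : 'I_N) (k : nat), 'M[R]_(r, M) -> 'rV[R]_(m i).
Variable Dbar : forall (i : 'I_N) (k : nat), 'M[R]_(k.+2, M) -> 'rV[R]_(m i).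
Variable X : set 'M[R]_(r.+1, M).
Hypothesis oX : open X.
Hypothesis Hfbar : forall i k, (k < r)%N ->
  smooth_on [set firstrows k.+2 (submxrow z i) | z in X] (@fbar i k).
Hypothesis HDbar : forall i k, (k < r)%N -> smooth (@Dbar i k).

Definition Vrow (s : nat) (k : nat) (W : 'M[R]_(s.+2, M)) : 'rV[R]_M :=
  \mxrow_(i < N) (@fbar i k (firstrows k.+2 (submxrow W i)) +
     @Dbar i k (snoc (firstrows k.+1 W) (lowmask i (row (inord k.+1) W)))).

Definition Vf (s : nat) (W : 'M[R]_(s.+2, M)) : 'M[R]_(s.+1, M) :=
  \matrix_(k < s.+1, c < M) Vrow k W 0 c.

Fixpoint Hf (s : nat) : 'M[R]_(s.+1, M) -> 'rV[R]_M :=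
  match s return 'M[R]_(s.+1, M) -> 'rV[R]_M with
  | 0 => fun W => row ord0 W
  | s'.+1 => fun W => 'd (@Hf s') (firstrows s'.+1 W) (Vf W)
  end.

Definition Ys (s : nat) := [set firstrows s.+1 z | z in X].

Lemma cont_Cn0 (V W : normedModType R) (f : V -> W) :
  Cn_on setT 0 f -> continuous f.
Proof. by move=> H x; apply: H. Qed.

Lemma Cn_lowmask (V : normedModType R) (A : set V) n (F : V -> 'rV[R]_M) i :
  open A -> Cn_on A n F -> Cn_on A n (fun x => lowmask i (F x)).
Proof.
move=> oA HF.
apply: (Cn_mxrow (B := fun l x => if (l < i)%N then submxrow (F x) l else 0)) => // l.
by case: (l < i)%N; [apply: Cn_submxrow|apply: Cn_cst].
Qed.

Arguments Ys : clear implicits.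
Lemma smooth_Hf s : (s < r)%N -> forall n, Cn_on (Ys s) n (@Hf s).
Proof.
have oY : forall s, (s < r)%N -> open (Ys s).
  by move=> s' sr; apply: open_firstrows => //; lia.
elim: s => [|s IH] sr n.
  by apply: Cn_row; [apply: oY|apply: Cn_id].
have sr' : (s < r)%N by lia.
apply: (Cn_dG (B := Ys s)); [exact: oY| exact: oY sr'| | exact: IH | |].
- move=> _ [z Xz <-]; exists z => //.
  by rewrite firstrows_firstrows //; lia.
- by apply: Cn_firstrows; [apply: oY|apply: Cn_id].
- apply: Cn_mx; first exact: oY.
  move=> k c; set i := tagnat.sig1 c.
  have kr : (k < r)%N by have := ltn_ord k; lia.
  apply: (Cn_ext (g := fun W : 'M[R]_(s.+2, M) =>
    (@fbar i k (firstrows k.+2 (submxrow W i)) +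
     @Dbar i k (snoc (firstrows k.+1 W) (lowmask i (row (inord k.+1) W))))
     0 (tagnat.sig2 c))).
    by move=> W; rewrite !mxE.
  apply: Cn_entry; first exact: oY.
  apply: Cn_addf; first exact: oY.
  + apply: (Cn_ext (g := (@fbar i k) \o
       (fun W : 'M[R]_(s.+2, M) => firstrows k.+2 (submxrow W i)))) => //.
    apply: Cn_linR; first exact: oY.
    * by move=> u v w; apply/matrixP => ? ?; rewrite !mxE.
    * apply: cont_Cn0; apply: Cn_firstrows; first exact: openT.
      by apply: Cn_submxrow; [exact: openT|exact: Cn_id].
    apply: (Cn_sub (B := [set firstrows k.+2 (submxrow z i) | z in X])).
      move=> _ [W [z Xz <-] <-]; exists z => //.
      rewrite submxrow_firstrows firstrows_firstrows //.
      by have := ltn_ord k; lia.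
    exact: Hfbar.
  + apply: (Cn_comp (B := setT)) => //; [exact: oY|exact: openT|exact: HDbar|].
    apply: Cn_snoc; first exact: oY.
      by apply: Cn_firstrows; [exact: oY|exact: Cn_id].
    apply: Cn_lowmask; first exact: oY.
    by apply: Cn_row; [exact: oY|exact: Cn_id].
Qed.


Hypothesis HDelta : forall i k, (k < r)%N -> forall z, X z ->
  Delta i k (firstrows r z) =
  @Dbar i k (snoc (firstrows k.+1 z) (lowmask i (row (inord k.+1) z))).

Variables (a b : R) (z : R -> 'M[R]_(r.+1, M)).
Hypothesis HzX : forall t, a < t < b -> X (z t).
Hypothesis Hder : forall t, a < t < b -> forall i k, (k < r)%N ->
  is_derive t 1 (fun s => row (inord k) (submxrow (z s) i))
    (@fbar i k (firstrows k.+2 (submxrow (z t) i)) + Delta i k (firstrows r (z t))).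

Lemma near_ab t : a < t < b -> \forall s \near t, a < s < b.
Proof.
move=> tab; have : t \in `]a, b[ by rewrite in_itv.
move=> /near_in_itvoo; apply: filterS => s; by rewrite in_itv.
Qed.

Lemma entry_der t (k : nat) (c : 'I_M) : a < t < b -> (k < r)%N ->
  derivable (fun s => z s (inord k) c) t 1 /\
  'D_1 (fun s => z s (inord k) c) t =
  (@fbar (tagnat.sig1 c) k (firstrows k.+2 (submxrow (z t) (tagnat.sig1 c))) +
   Delta (tagnat.sig1 c) k (firstrows r (z t))) 0 (tagnat.sig2 c).
Proof.
move=> tab kr; set i := tagnat.sig1 c.
have E : (fun s => z s (inord k) c) =
   (fun s => (row (inord k) (submxrow (z s) i)) 0 (tagnat.sig2 c)).
  by apply: funext => s; rewrite !mxE tagnat.sig2K.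
have [d v] := Hder tab i kr.
have := d; move/derivable_mxP => /(_ 0 (tagnat.sig2 c)) dd.
rewrite E; split => //.
have := derive_mx d; rewrite v => /matrixP /(_ 0 (tagnat.sig2 c)) H.
by rewrite H mxE.
Qed.


Lemma c_der s t : (s < r)%N -> a < t < b ->
  derivable (fun u => firstrows s.+1 (z u)) t 1 /\
  'D_1 (fun u => firstrows s.+1 (z u)) t = @Vf s (firstrows s.+2 (z t)).
Proof.
move=> sr tab.
have ent : forall (u : 'I_s.+1) c,
    (fun x => firstrows s.+1 (z x) u c) = (fun x => z x (inord u) c).
  by move=> u c; apply: funext => x; rewrite mxE.
have ur : forall u : 'I_s.+1, (u < r)%N by move=> u; have := ltn_ord u; lia.
have dv : derivable (fun u => firstrows s.+1 (z u)) t 1.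
  by apply/derivable_mxP => u c; rewrite ent; exact: (entry_der c tab (ur u)).1.
split => //.
rewrite derive_mx //; apply/matrixP => u c.
rewrite [LHS]mxE ent (entry_der c tab (ur u)).2.
rewrite [RHS]mxE /Vrow [RHS]mxE.
have hu := ltn_ord u.
rewrite HDelta //; last exact: HzX.
rewrite submxrow_firstrows firstrows_firstrows; last 2 first.
- by clear ent dv; lia.
- by clear ent dv; lia.
rewrite firstrows_firstrows; last 2 first.
- by clear ent dv; lia.
- by clear ent dv; lia.
rewrite row_firstrows //; by clear ent dv; lia.
Qed.


Definition yt := fun u => row ord0 (z u).

Lemma Hf_diff s t : (s < r)%N -> a < t < b ->
  differentiable (@Hf s) (firstrows s.+1 (z t)).
Proof.
move=> sr tab; have := smooth_Hf sr 1 => /= [[d _]].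
by apply: d; exists (z t) => //; apply: HzX.
Qed.

Lemma Hf_traj s : (s < r)%N -> forall t, a < t < b ->
  derive1n s yt t = @Hf s (firstrows s.+1 (z t)).
Proof.
elim: s => [|s IH] sr t tab.
  apply/rowP => c; rewrite [LHS]mxE [RHS]mxE [RHS]mxE; congr (z t _ c).
  by apply/val_inj; rewrite /= inordK.
have sr' : (s < r)%N by clear IH; lia.
rewrite derive1nS derive1E.
have ne : \forall u \near t,
    derive1n s yt u = ((@Hf s) \o (fun u => firstrows s.+1 (z u))) u.
  by apply: filterS (near_ab tab) => u uab; rewrite [RHS]/comp IH.
rewrite (near_eq_derive _ ne).
have [dc Dc] := c_der sr' tab.
have dc' := dc; move/derivable1_diffP in dc'.
have dH := Hf_diff sr' tab.
rewrite (deriveE (f := (@Hf s) \o (fun u => firstrows s.+1 (z u)))); last first.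
  exact: differentiable_comp.
rewrite diff_comp //.
rewrite [LHS]/comp -(deriveE (f := fun u : R => firstrows s.+1 (z u)) (a := t)) //.
rewrite Dc.
have E : firstrows s.+1 (firstrows s.+2 (z t)) = firstrows s.+1 (z t).
  by rewrite firstrows_firstrows //; clear IH ne dc dc' Dc dH; lia.
by rewrite -E.
Qed.


Lemma y_derivable s t : (s < r)%N -> a < t < b -> derivable (derive1n s yt) t 1.
Proof.
move=> sr tab.
have ne : \forall u \near t,
    ((@Hf s) \o (fun u => firstrows s.+1 (z u))) u = derive1n s yt u.
  by apply: filterS (near_ab tab) => u uab; rewrite [RHS]Hf_traj.
apply: (near_eq_derivable ne).
have [dc _] := c_der sr tab.
have dH := Hf_diff sr tab.
apply/derivable1_diffP; apply: differentiable_comp => //.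
exact/derivable1_diffP.
Qed.

End Part2.

Section Jet.
Variable R : realType.

Lemma jet_der p (y : R -> 'rV[R]_p) k t :
  (forall s, (s <= k)%N -> derivable (derive1n s y) t 1) ->
  derivable (jet y k) t 1 /\ 'D_1 (jet y k) t = lastrows (jet y k.+1 t).
Proof.
move=> H.
have ent : forall (s : 'I_k.+1) c,
    (fun u => jet y k u s c) = (fun u => derive1n s y u 0 c).
  by move=> s c; apply: funext => u; rewrite mxE.
have dent : forall (s : 'I_k.+1) c, derivable (fun u => derive1n s y u 0 c) t 1.
  move=> s c; have := H s (ltn_ord s).
  by move/derivable_mxP => /(_ 0 c).
have dv : derivable (jet y k) t 1.
  by apply/derivable_mxP => s c; rewrite ent.
split => //; rewrite derive_mx //; apply/matrixP => s c.
rewrite [LHS]mxE ent [RHS]mxE [RHS]mxE inordK; last by have := ltn_ord s; lia.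
have ds := H s (ltn_ord s).
rewrite derive1nS derive1E (derive_mx ds) mxE.
by [].
Qed.

Lemma firstrows_jet p (y : R -> 'rV[R]_p) k t :
  firstrows k.+1 (jet y k.+1 t) = jet y k t.
Proof.
apply/matrixP => s c; rewrite !mxE inordK //.
by have := ltn_ord s; lia.
Qed.

End Jet.

Section Part3.
Variables (R : realType) (N r : nat) (m : 'I_N -> nat).
Local Notation M := (\sum_(l < N) m l)%N.
Variable fbar : forall (i : 'I_N) (k : nat), 'M[R]_(k.+2, m i) -> 'rV[R]_(m i).
Variable Delta : forall (i : 'I_N) (k : nat), 'M[R]_(r, M) -> 'rV[R]_(m i).
Variable Dbar : forall (i : 'I_N) (k : nat), 'M[R]_(k.+2, M) -> 'rV[R]_(m i).
Variable h : forall (i : 'I_N) (k : nat), 'M[R]_(k.+2, m i) -> 'rV[R]_(m i).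
Variable X : set 'M[R]_(r.+1, M).
Hypothesis oX : open X.
Hypothesis Hfbar : forall i k, (k < r)%N ->
  smooth_on [set firstrows k.+2 (submxrow z i) | z in X] (@fbar i k).
Hypothesis HDbar : forall i k, (k < r)%N -> smooth (@Dbar i k).
Hypothesis HDelta : forall i k, (k < r)%N -> forall z, X z ->
  Delta i k (firstrows r z) =
  @Dbar i k (snoc (firstrows k.+1 z) (lowmask i (row (inord k.+1) z))).
Hypothesis Hh : forall i k, (k < r)%N -> smooth (@h i k).
Hypothesis Hhinv : forall i k, (k < r)%N -> forall z, X z ->
  @h i k (snoc (firstrows k.+1 (submxrow z i))
              (@fbar i k (firstrows k.+2 (submxrow z i))))
  = row (inord k.+1) (submxrow z i).
Variables (a b : R) (z : R -> 'M[R]_(r.+1, M)).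
Hypothesis HzX : forall t, a < t < b -> X (z t).
Hypothesis Hder : forall t, a < t < b -> forall i k, (k < r)%N ->
  is_derive t 1 (fun s => row (inord k) (submxrow (z s) i))
    (@fbar i k (firstrows k.+2 (submxrow (z t) i)) + Delta i k (firstrows r (z t))).

Let y := fun u => row ord0 (z u).

Lemma yder s t : (s < r)%N -> a < t < b -> derivable (derive1n s y) t 1.
Proof. exact: (y_derivable oX Hfbar HDbar HDelta HzX Hder). Qed.

Lemma accfS k (P : 'M[R]_(k.+1, M)) (dt : forall l : 'I_N, 'rV[R]_(m l)) n' :
  accf h Dbar P dt n'.+1 =
  \mxrow_(l < N) (if (l == n' :> nat)
     then @h l k (snoc (submxrow P l) (dt l - @Dbar l k (snoc P (accf h Dbar P dt n'))))
     else submxrow (accf h Dbar P dt n') l).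
Proof. by []. Qed.

Lemma accf_val k t (dt : forall l : 'I_N, 'rV[R]_(m l)) : (k < r)%N -> a < t < b ->
  (forall l, dt l = @fbar l k (firstrows k.+2 (submxrow (z t) l)) +
                    Delta l k (firstrows r (z t))) ->
  forall n', accf h Dbar (firstrows k.+1 (z t)) dt n' =
    \mxrow_(l < N) (if (l < n')%N then submxrow (row (inord k.+1) (z t)) l else 0).
Proof.
move=> kr tab Hdt; elim=> [|n' IH].
  by apply/matrixP => u c; rewrite !mxE.
rewrite accfS IH; apply: eq_mxrow => l.
case: (eqVneq (l : nat) n') => [e|ne].
  have Xt := HzX tab.
  have -> : \mxrow_(l0 < N) (if (l0 < n')%N then
               submxrow (row (inord k.+1) (z t)) l0 else 0) =
            lowmask l (row (inord k.+1) (z t)).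
    by apply: eq_mxrow => l'; rewrite e.
  rewrite -HDelta // Hdt addrK submxrow_firstrows Hhinv //.
  rewrite e ltnSn; apply/matrixP => u c; rewrite !mxE.
  by [].
rewrite mxrowK.
have E : (l < n'.+1)%N = (l < n')%N.
  by move: ne; clear; move=> ne; apply/idP/idP; lia.
by rewrite E.
Qed.


Lemma Phi_diff l k Y : (k <= r)%N -> differentiable (Phi h Dbar l k) Y.
Proof.
move=> kr.
have S : smooth (Phi h Dbar l k).
  apply: smooth_Phi => l' k' kk; [apply: Hh|apply: HDbar]; lia.
by have [d _] := S 1; apply: d.
Qed.

Lemma PhiM_traj k : (k <= r)%N -> forall t, a < t < b ->
  PhiM h Dbar (jet y k t) = firstrows k.+1 (z t).
Proof.
elim: k => [|k IH] kr t tab.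
  apply/matrixP => s c; rewrite /= !mxE.
  have -> : s = ord0 by apply/val_inj; case: s => [[]].
  rewrite [X in X = _]/= /y mxE; congr (z t _ c); by apply/val_inj; rewrite /= inordK.
have kr' : (k < r)%N by lia.
change (snoc (PhiM h Dbar (firstrows k.+1 (jet y k.+1 t)))
   (newrow h Dbar (@PhiM R N m h Dbar k) (jet y k.+1 t)) = firstrows k.+2 (z t)).
rewrite newrowE firstrows_jet IH //; last by lia.
have [dj Dj] : derivable (jet y k) t 1 /\ 'D_1 (jet y k) t = lastrows (jet y k.+1 t).
  by apply: jet_der => s sk; apply: yder => //; lia.
rewrite (@accf_val k t); [|by []|by []|]; last first.
  move=> l.
  set G := fun Z => submxrow (row ord_max (PhiM h Dbar Z)) l.
  have dG : differentiable G (jet y k t) by apply: Phi_diff; lia.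
  have dj' := dj; move/derivable1_diffP in dj'.
  rewrite -Dj deriveE //.
  rewrite -[LHS]/(('d G (jet y k t) \o 'd (jet y k) t) 1) -(diff_comp dj' dG).
  rewrite -deriveE; last exact: differentiable_comp.
  have ne : \forall u \near t,
      (G \o jet y k) u = row (inord k) (submxrow (z u) l).
    apply: filterS (near_ab tab) => u uab.
    rewrite /G /= IH //; last by lia.
    by apply/matrixP => p q; rewrite !mxE.
  rewrite (near_eq_derive _ ne).
  by case: (Hder tab l kr').
apply/matrixP => s c; rewrite !mxE.
case: ifP => sk.
  have e2 : (s < r.+1)%N by move: sk kr; clear; lia.
  have e1 : ((inord s : 'I_k.+1) : nat) = s by rewrite inordK.
  by congr (z t _ c); apply/val_inj; rewrite /= e1 inordK.
rewrite ltn_ord mxE mxE tagnat.sig2K.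
have e2 : (k.+1 < r.+1)%N by move: kr; clear; lia.
have es : s = k.+1 :> nat by have := ltn_ord s; move: sk; clear; lia.
by congr (z t _ c); apply/val_inj; rewrite /= es inordK.
Qed.


Lemma traj_main t : a < t < b ->
  (forall s, (s < r)%N -> derivable (derive1n s y) t 1) /\
  (forall i k, (k < r)%N ->
     row (inord k) (submxrow (z t) i) = Phi h Dbar i k (jet y k t)) /\
  (forall i, row ord_max (submxrow (z t) i) = Phi h Dbar i r (jet y r t)).
Proof.
move=> tab; split; first by move=> s sr; exact: yder.
split.
  move=> i k kr; rewrite /Phi PhiM_traj //; last by move: kr; clear; lia.
  apply/matrixP => p q; rewrite !mxE; congr (z t _ _).
move=> i; rewrite /Phi PhiM_traj //.
apply/matrixP => p q; rewrite !mxE; congr (z t _ _).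
by apply/val_inj; rewrite /= inordK.
Qed.

End Part3.

Unset Implicit Arguments.

Theorem theorem2 (R : realType) (N r : nat) (m : 'I_N -> nat)
  (fbar : forall (i : 'I_N) (k : nat), 'M[R]_(k.+2, m i) -> 'rV[R]_(m i))
  (Delta : forall (i : 'I_N) (k : nat),
     'M[R]_(r, \sum_(l < N) m l) -> 'rV[R]_(m i))
  (Dbar : forall (i : 'I_N) (k : nat),
     'M[R]_(k.+2, \sum_(l < N) m l) -> 'rV[R]_(m i))
  (h : forall (i : 'I_N) (k : nat), 'M[R]_(k.+2, m i) -> 'rV[R]_(m i))
  (X : set 'M[R]_(r.+1, \sum_(l < N) m l))
  (z0 : 'M[R]_(r.+1, \sum_(l < N) m l)) :
  (0 < r)%N ->
  open X -> X z0 ->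
  (* regularity of the pure-feedback subsystems *)
  (forall i k, (k < r)%N ->
     smooth_on [set firstrows k.+2 (submxrow z i) | z in X] (fbar i k)) ->
  (forall i k, (k < r)%N ->
     \det (jacobian (fun w => fbar i k (snoc (firstrows k.+1 (submxrow z0 i)) w))
                    (row (inord k.+1) (submxrow z0 i))) != 0) ->
  (* smooth coupling, lower-triangular on X *)
  (forall i k, (k < r)%N -> smooth (Delta i k)) ->
  (forall i k, (k < r)%N -> smooth (Dbar i k)) ->
  (forall i k, (k < r)%N -> forall z, X z ->
     Delta i k (firstrows r z) =
     Dbar i k (snoc (firstrows k.+1 z) (lowmask i (row (inord k.+1) z)))) ->
  (* the smooth left inverses h *)
  (forall i k, (k < r)%N -> smooth (h i k)) ->
  (forall i k, (k < r)%N -> forall z, X z ->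
     h i k (snoc (firstrows k.+1 (submxrow z i))
                 (fbar i k (firstrows k.+2 (submxrow z i))))
     = row (inord k.+1) (submxrow z i)) ->
  (forall i k, (k <= r)%N -> smooth (Phi h Dbar i k)) /\
  (forall (a b : R) (z : R -> 'M[R]_(r.+1, \sum_(l < N) m l)),
     (forall t, a < t < b -> X (z t)) ->
     (forall t, a < t < b -> forall i k, (k < r)%N ->
        is_derive t 1 (fun s => row (inord k) (submxrow (z s) i))
          (fbar i k (firstrows k.+2 (submxrow (z t) i))
           + Delta i k (firstrows r (z t)))) ->
     forall t, a < t < b ->
       (forall s, (s < r)%N -> derivable (derive1n s (fun s => row ord0 (z s))) t 1) /\
       (forall i k, (k < r)%N ->
          row (inord k) (submxrow (z t) i)
          = Phi h Dbar i k (jet (fun s => row ord0 (z s)) k t)) /\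
       (forall i, row ord_max (submxrow (z t) i)
          = Phi h Dbar i r (jet (fun s => row ord0 (z s)) r t))).

Proof.
move=> r0 oX Xz0 Hfbar Hdet HDelta_s HDbar HDelta Hh Hhinv.
split.
  move=> i k kr; apply: smooth_Phi => l k' kk; [apply: Hh|apply: HDbar];
  by move: kr kk; clear; lia.
move=> a b z HzX Hder t tab.
exact: (traj_main oX Hfbar HDbar HDelta Hh Hhinv HzX Hder tab).
Qed.
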